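(* Let an ordered storyline instance be given and let $\Delta,\overline{\Delta}\in\mathbb{N}$. Consider the polyhedron $P$ in the variables $y_{t,c}$ ($t\in[\ell]$, $c\in\mathrm{Ac}(t)$) and $w_{t,c}$ ($t\in[\ell-1]$, $c\in\mathrm{Ac}(t)\cap\mathrm{Ac}(t+1)$) defined by the constraints: $y_{t,c'}-y_{t,c}=\Delta$ for all $t\in[\ell]$ and $(c,c')\in N_{\mathcal{M}}(t)$; $y_{t,c'}-y_{t,c}\ge\overline{\Delta}$ for all $t\in[\ell]$ and $(c,c')\in N_A(t)$; $y_{t,c}-y_{t+1,c}\le w_{t,c}$ and $y_{t+1,c}-y_{t,c}\le w_{t,c}$ for all $t\in[\ell-1]$, $c\in\mathrm{Ac}(t)\cap\mathrm{Ac}(t+1)$; and $y_{t,c}\ge 0$ for all $t\in[\ell]$, $c\in\mathrm{Ac}(t)$. Then every extreme point of $P$ is integral.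
   Context: Write $[n]=\{1,\dots,n\}$. An ordered storyline instance consists of characters $\mathcal{C}$, time steps $[\ell]$, meetings $\mathcal{M}$ (each meeting $M$ has a time step $\mathrm{tm}(M)$ and character set $\mathrm{char}(M)$), for each character $c$ a set $A(c)$ of consecutive active time steps, and for each $t$ a permutation $\pi_t$ of the active characters $\mathrm{Ac}(t)=\{c: t\in A(c)\}$ in which the characters of each meeting at time $t$ are consecutive; $c\prec_t c'$ means $c$ precedes $c'$ in $\pi_t$. For $t\in[\ell]$: $N(t)$ is the set of pairs $(c,c')$ of characters consecutive in $\pi_t$ with $c\prec_t c'$; $N_{\mathcal{M}}(t)$ is the set of pairs in $N(t)$ whose two characters belong to a common meeting at time step $t$; $N_A(t)=N(t)\setminus N_{\mathcal{M}}(t)$. *)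

(* Defs.v *)
From HB Require Import structures.
From mathcomp Require Import all_boot all_order all_algebra.
From mathcomp Require Import reals.
Set Implicit Arguments. Unset Strict Implicit. Unset Printing Implicit Defensive.
Import Order.TTheory GRing.Theory Num.Theory.
Local Open Scope ring_scope.

(* Conventions: the time steps [l] = {1,..,l} are represented by
   0,..,l-1 (the ordinals 'I_l); "t+1" is t.+1.
   - C : finite type of characters
   - M : finite type of meetings, tm m its time step, chm m its character set
   - act c t  <=> t \in A(c)   (so Ac(t) = [pred c | act c t])
   - pi t     : the permutation pi_t of Ac(t), as a duplicate-free sequence *)

Section Storyline.
Variables (l : nat) (C M : finType) (tm : M -> nat) (chm : M -> {set C})
          (act : C -> nat -> bool) (pi : nat -> seq C).

Definition storyline_instance : Prop :=
  (forall c t, act c t -> (t < l)%N) /\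
  (forall c t1 t2 t, act c t1 -> act c t2 -> (t1 <= t <= t2)%N -> act c t) /\
  (forall t, (t < l)%N -> uniq (pi t) /\ forall c, (c \in pi t) = act c t) /\
  (* meetings happen at a time step, and their characters are consecutive in pi_(tm m) *)
  (forall m, (tm m < l)%N /\
     exists i, chm m = [set c in take #|chm m| (drop i (pi (tm m)))]).

Definition consec (t : nat) (c c' : C) : Prop :=
  exists s1 s2, pi t = s1 ++ c :: c' :: s2.

Definition common_meeting (t : nat) (c c' : C) : Prop :=
  exists m : M, tm m = t /\ c \in chm m /\ c' \in chm m.

Definition NM (t : nat) (c c' : C) : Prop := consec t c c' /\ common_meeting t c c'.
Definition NA (t : nat) (c c' : C) : Prop := consec t c c' /\ ~ common_meeting t c c'.

Definition yvar := {p : 'I_l * C | act p.2 p.1}.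
Definition wvar := {p : 'I_l * C | act p.2 p.1 && act p.2 p.1.+1}.

Variable R : realType.

Definition storyline_polyhedron (Delta Dbar : nat) (y : yvar -> R) (w : wvar -> R) : Prop :=
  (forall a b : yvar, ((val a).1 = (val b).1 :> nat) ->
      NM (val a).1 (val a).2 (val b).2 -> y b - y a = Delta%:R) /\
  (forall a b : yvar, ((val a).1 = (val b).1 :> nat) ->
      NA (val a).1 (val a).2 (val b).2 -> y b - y a >= Dbar%:R) /\
  (forall (u : wvar) (a b : yvar), val a = val u ->
      ((val b).1 = (val u).1.+1 :> nat) -> (val b).2 = (val u).2 ->
      y a - y b <= w u /\ y b - y a <= w u) /\
  (forall a : yvar, 0 <= y a).

End Storyline.

Definition extreme_point (R : realType) (Y W : Type)
    (P : (Y -> R) -> (W -> R) -> Prop) (y : Y -> R) (w : W -> R) : Prop :=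
  P y w /\
  forall (y1 y2 : Y -> R) (w1 w2 : W -> R) (lam : R),
    P y1 w1 -> P y2 w2 -> 0 < lam < 1 ->
    (forall i, y i = lam * y1 i + (1 - lam) * y2 i) ->
    (forall j, w j = lam * w1 j + (1 - lam) * w2 j) ->
    (forall i, y1 i = y2 i) /\ (forall j, w1 j = w2 j).

Definition integral (R : realType) (X : Type) (x : X -> R) : Prop :=
  forall i, exists z : int, x i = z%:~R.

(* Main.v *)
Require Import Defs.
From HB Require Import structures.
From mathcomp Require Import all_boot all_order all_algebra.
From mathcomp Require Import reals ring lra.
Set Implicit Arguments. Unset Strict Implicit. Unset Printing Implicit Defensive.
Import Order.TTheory GRing.Theory Num.Theory.

Section Proof.
Local Open Scope ring_scope.
Variables (R : realType) (l : nat) (C M : finType)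
    (tm : M -> nat) (chm : M -> {set C}) (act : C -> nat -> bool)
    (pi : nat -> seq C) (Delta Dbar : nat).
Hypothesis Hinst : storyline_instance l tm chm act pi.
Local Notation Y := (yvar l act).
Local Notation W := (wvar l act).
Local Notation P := (@storyline_polyhedron l C M tm chm act pi R Delta Dbar).

Definition ext (f : Y -> R) (t : nat) (c : C) : R :=
  if [pick a : Y | ((val a).1 == t :> nat) && ((val a).2 == c)] is Some a
  then f a else 0.

Lemma extE f (a : Y) : ext f (val a).1 (val a).2 = f a.
Proof.
rewrite /ext; case: pickP => [a' /andP[/eqP h1 /eqP h2]|/(_ a)]; last by rewrite !eqxx.
have -> // : a' = a.
apply: val_inj; move: h1 h2; case: (val a') => t' c'; case: (val a) => t c /= h1 ->.
by rewrite (ord_inj h1).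
Qed.

Lemma wnb (u : W) : exists a b : Y,
  [/\ val a = val u, (val b).1 = (val u).1.+1 :> nat & (val b).2 = (val u).2].
Proof.
case: u => [[t c] /= /andP[h1 h2]].
have ht : (t.+1 < l)%N by case: Hinst => H _; exact: (H c t.+1 h2).
by exists (exist (fun p : 'I_l * C => act p.2 p.1) (t, c) h1),
          (exist (fun p : 'I_l * C => act p.2 p.1) (Ordinal ht, c) h2).
Qed.

Definition X (f : Y -> R) (u : W) : R :=
  ext f (val u).1.+1 (val u).2 - ext f (val u).1 (val u).2.

Lemma XE f (u : W) (a b : Y) : val a = val u ->
  (val b).1 = (val u).1.+1 :> nat -> (val b).2 = (val u).2 -> X f u = f b - f a.
Proof. move=> Ha Hb1 Hb2; rewrite /X -Hb1 -Hb2 extE; congr (_ - _); by rewrite Hb2 -Ha extE. Qed.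

Lemma wfeas (y : Y -> R) (w : W -> R) : P y w -> forall u, `|X y u| <= w u.
Proof.
move=> [_ [_ [H _]]] u; have [a [b [Ha Hb1 Hb2]]] := wnb u.
rewrite (XE _ Ha Hb1 Hb2); have [h1 h2] := H u a b Ha Hb1 Hb2.
rewrite ler_norml; apply/andP; split; lra.
Qed.

Lemma P_mod (y : Y -> R) (w w' : W -> R) :
  (forall a b : Y, ((val a).1 = (val b).1 :> nat) ->
      NM tm chm pi (val a).1 (val a).2 (val b).2 -> y b - y a = Delta%:R) ->
  (forall a b : Y, ((val a).1 = (val b).1 :> nat) ->
      NA tm chm pi (val a).1 (val a).2 (val b).2 -> y b - y a >= Dbar%:R) ->
  (forall a : Y, 0 <= y a) ->
  (forall u, `|X y u| <= w' u) -> P y w'.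
Proof.
move=> H1 H2 H4 Hw; split=> //; split=> //; split=> // u a b Ha Hb1 Hb2.
have := Hw u; rewrite (XE _ Ha Hb1 Hb2) ler_norml => /andP[h1 h2]; split; lra.
Qed.

Lemma half_ok : (0:R) < 2^-1 < (1:R). Proof. apply/andP; split; lra. Qed.

Lemma step1 (y : Y -> R) (w : W -> R) :
  extreme_point P y w -> forall u, w u = `|X y u|.
Proof.
move=> [HP Hext] u; apply/eqP; rewrite eq_le wfeas // andbT leNgt; apply/negP=> hlt.
set s := w u - `|X y u|.
have hs : 0 < s by rewrite /s subr_gt0.
pose w1 := fun j => w j + (if j == u then s else 0).
pose w2 := fun j => w j - (if j == u then s else 0).
have [H1 [H2 [_ H4]]] := HP.
have HP1 : P y w1.
  apply: P_mod => // j; rewrite /w1; have := wfeas HP j; case: eqP => _; lra.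
have HP2 : P y w2.
  apply: P_mod => // j; rewrite /w2; have := wfeas HP j.
  case: eqP => [->|_]; rewrite /s; lra.
have [_ Hw] := Hext y y w1 w2 (2^-1) HP1 HP2 half_ok (fun i => ltac:(lra))
  (fun j => ltac:(rewrite /w1 /w2; lra)).
have := Hw u; rewrite /w1 /w2 eqxx; lra.
Qed.

Lemma absum (x e : R) : `|e| <= `|x| -> `|x + e| + `|x - e| = 2 * `|x|.
Proof.
have [hx|hx] := leP 0 x.
  rewrite (ger0_norm hx) ler_norml => /andP[h1 h2].
  rewrite !ger0_norm; lra.
rewrite (ltr0_norm hx) ler_norml => /andP[h1 h2].
rewrite !ler0_norm; lra.
Qed.

Lemma step2 (y : Y -> R) (w : W -> R) (a0 : Y) :
  extreme_point P y w -> y a0 \is a Num.int.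
Proof.
move=> Hep; have [HP Hext] := Hep; have Hw := step1 Hep.
have [H1 [H2 [_ H4]]] := HP.
apply/negPn/negP => Hn.
pose d (a : Y) : R := if (y a - y a0) \is a Num.int then 1 else 0.
have dE : forall a b : Y, (y b - y a) \is a Num.int -> d a = d b.
  move=> a b hab; rewrite /d.
  have -> : ((y a - y a0) \is a Num.int) = ((y b - y a0) \is a Num.int) => //.
  apply/idP/idP => h.
    have -> : y b - y a0 = (y b - y a) + (y a - y a0) by ring.
    by rewrite rpredD.
  have -> : y a - y a0 = (y b - y a0) - (y b - y a) by ring.
  by rewrite rpredB.
pose h (x : R) := if 0 < x then x else 1.
have hpos : forall x, 0 < h x by move=> x; rewrite /h; case: ifP => // _; lra.
have hle : forall x, 0 < x -> h x <= x by move=> x hx; rewrite /h hx.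
pose F (a b : Y) := Order.min (h `|y b - y a|)
   (Order.min (h (y b - y a - Dbar%:R)) (h (y a))).
pose eps := \big[Order.min/1]_(a : Y) \big[Order.min/1]_(b : Y) F a b.
have epsF : forall a b, eps <= F a b.
  move=> a b; apply: le_trans (bigmin_le _ a _) _; exact: bigmin_le.
have eps0 : 0 < eps.
  apply: (big_ind (fun x : R => 0 < x)) => //; first by move=> x z hx hz; rewrite lt_min hx.
  move=> a _; apply: (big_ind (fun x : R => 0 < x)) => //.
    by move=> x z hx hz; rewrite lt_min hx.
  by move=> b _; rewrite /F !lt_min !hpos.
have eps1 : forall a b : Y, y b - y a != 0 -> eps <= `|y b - y a|.
  move=> a b hne; apply: le_trans (epsF a b) _; rewrite ge_min hle //.
  by rewrite normr_gt0.
have eps2 : forall a b : Y, 0 < y b - y a - Dbar%:R -> eps <= y b - y a - Dbar%:R.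
  move=> a b hp; apply: le_trans (epsF a b) _; rewrite ge_min; apply/orP; right.
  by rewrite ge_min hle.
have eps3 : forall a : Y, 0 < y a -> eps <= y a.
  move=> a hp; apply: le_trans (epsF a a) _; rewrite ge_min; apply/orP; right.
  by rewrite ge_min hle ?orbT.
have d01 : forall a, d a = 0 \/ d a = 1 by move=> a; rewrite /d; case: ifP; auto.
pose ys (s : R) a := y a + s * eps * d a.
have Pys : forall s, (s = 1 \/ s = -1) -> P (ys s) (fun u => `|X (ys s) u|).
  move=> s hs; apply: P_mod => //.
  - move=> a b ht hnm; rewrite /ys.
    have e := H1 a b ht hnm.
    rewrite (dE a b); last by rewrite e natr_int.
    rewrite -e; ring.
  - move=> a b ht hna; rewrite /ys.
    have e := H2 a b ht hna.
    move: e; rewrite le_eqVlt => /orP[/eqP e|e].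
      rewrite (dE a b); last by rewrite -e natr_int.
      have -> : y b + s * eps * d b - (y a + s * eps * d b) = y b - y a by ring.
      by rewrite -e.
    have := eps2 a b ltac:(lra).
    case: (d01 a) => ->; case: (d01 b) => ->; case: hs => ->; lra.
  - move=> a; rewrite /ys; have := H4 a; rewrite le_eqVlt => /orP[/eqP e|e].
      have -> : d a = 0.
        rewrite /d -e add0r rpredN; case: ifP => // hh; by rewrite hh in Hn.
      rewrite -e; lra.
    have := eps3 a e; case: (d01 a) => ->; case: hs => ->; lra.
have Hext' := Hext (ys 1) (ys (-1)) _ _ (2^-1) (Pys 1 (or_introl erefl))
  (Pys (-1) (or_intror erefl)) half_ok.
have hyeq : forall i, y i = 2^-1 * ys 1 i + (1 - 2^-1) * ys (-1) i.
  by move=> i; rewrite /ys; lra.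
have hweq : forall u, `|X y u| = 2^-1 * `|X (ys 1) u| + (1 - 2^-1) * `|X (ys (-1)) u|.
  move=> u; have [a [b [Ha Hb1 Hb2]]] := wnb u.
  rewrite !(XE _ Ha Hb1 Hb2) /ys.
  have [hi|hi] := boolP ((y b - y a) \is a Num.int).
    rewrite (dE a b hi).
    have -> : y b + 1 * eps * d b - (y a + 1 * eps * d b) = y b - y a by ring.
    have -> : y b + -1 * eps * d b - (y a + -1 * eps * d b) = y b - y a by ring.
    lra.
  have hne : y b - y a != 0 by apply: contraNneq hi => ->; rewrite rpred0.
  have := eps1 a b hne.
  have -> : y b + 1 * eps * d b - (y a + 1 * eps * d a) = (y b - y a) + eps * (d b - d a) by ring.
  have -> : y b + -1 * eps * d b - (y a + -1 * eps * d a) = (y b - y a) - eps * (d b - d a) by ring.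
  move=> he; rewrite -[_ * _ + _]/(2^-1 * `|y b - y a + eps * (d b - d a)| + (1 - 2^-1) * `|y b - y a - eps * (d b - d a)|).
  have : `|y b - y a + eps * (d b - d a)| + `|y b - y a - eps * (d b - d a)| = 2 * `|y b - y a|.
    apply: absum; apply: le_trans he.
    case: (d01 a) => ->; case: (d01 b) => ->; rewrite ?subrr ?mulr0 ?normr0 ?subr0 ?sub0r ?mulr1 ?mulrN1 ?normrN ?gtr0_norm //; lra.
  lra.
have [Hy _] := Hext' hyeq (fun u => etrans (Hw u) (hweq u)).
have := Hy a0; rewrite /ys /d subrr rpred0; lra.
Qed.

End Proof.

Theorem proposition1 (R : realType) (l : nat) (C M : finType)
    (tm : M -> nat) (chm : M -> {set C}) (act : C -> nat -> bool)
    (pi : nat -> seq C) (Delta Dbar : nat) :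
  storyline_instance l tm chm act pi ->
  forall (y : yvar l act -> R) (w : wvar l act -> R),
    extreme_point (storyline_polyhedron tm chm pi Delta Dbar) y w ->
    integral y /\ integral w.
Proof.
move=> Hinst y w Hep.
have Hy : forall a, y a \is a Num.int by move=> a; exact: (step2 Hinst a Hep).
split=> [a|u]; first by apply/intrP.
rewrite (step1 Hinst Hep u); have [a [b [Ha Hb1 Hb2]]] := wnb Hinst u.
rewrite (XE _ Ha Hb1 Hb2); apply/intrP.
have := natr_norm_int (rpredB (Hy b) (Hy a)); move/natrP => [n ->].
exact: natr_int.
Qed.
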